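(* Let $\mathcal D^S$ denote the class of all functions $d:\mathbb{R}^n\times\mathbb{R}^n\to\mathbb{R}$ of the form $$d(x,y)=\phi(x)-\phi(y)-\langle s(y),\,x-y\rangle\qquad(x,y\in\mathbb{R}^n),$$ where $\phi:\mathbb{R}^n\to\mathbb{R}$ is a (finite-valued) convex function and $s:\mathbb{R}^n\to\mathbb{R}^n$ is a subgradient map of $\phi$, i.e. $s(y)\in\partial\phi(y)$ for every $y$. Let $d:\mathbb{R}^n\times\mathbb{R}^n\to\mathbb{R}$ be a divergence, i.e. $d(x,y)\ge 0$ for all $x,y$ and $d(y,y)=0$ for all $y$. Then $d\in\mathcal D^S$ if and only if both of the following hold: (i) for every $a\in\mathbb{R}^n$, the map $x\mapsto d(x,a)$ is convex; (ii) for every $a,b\in\mathbb{R}^n$, the map $x\mapsto d(x,a)-d(x,b)$ is affine, i.e. of the form $x\mapsto\langle h,x\rangle+c$ for some $h\in\mathbb{R}^n$ and $c\in\mathbb{R}$.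
   Context: $\partial\phi(y)=\{g\in\mathbb{R}^n:\ \phi(x)\ge\phi(y)+\langle g,x-y\rangle\ \forall x\}$ denotes the subdifferential of the convex function $\phi$ at $y$. The divergences in $\mathcal D^S$ are called generalized Bregman divergences. *)

(* Defs.v *)
(* R^n is 'rV[R]_n over an arbitrary real field R. *)
From HB Require Import structures.
From mathcomp Require Import all_boot all_order all_algebra.
Set Implicit Arguments. Unset Strict Implicit. Unset Printing Implicit Defensive.
Import Order.TTheory GRing.Theory Num.Theory.
Local Open Scope ring_scope.

Definition dotv (R : realFieldType) (n : nat) (u v : 'rV[R]_n) : R :=
  \sum_(i < n) u 0 i * v 0 i.

Definition convexf (R : realFieldType) (n : nat) (f : 'rV[R]_n -> R) : Prop :=
  forall (x y : 'rV[R]_n) (t : R), 0 <= t -> t <= 1 ->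
    f (t *: x + (1 - t) *: y) <= t * f x + (1 - t) * f y.

Definition affinef (R : realFieldType) (n : nat) (f : 'rV[R]_n -> R) : Prop :=
  exists (h : 'rV[R]_n) (c : R), forall x, f x = dotv h x + c.

Definition in_subdiff (R : realFieldType) (n : nat) (phi : 'rV[R]_n -> R)
  (y g : 'rV[R]_n) : Prop :=
  forall x, phi y + dotv g (x - y) <= phi x.

Definition divergence (R : realFieldType) (n : nat)
  (d : 'rV[R]_n -> 'rV[R]_n -> R) : Prop :=
  (forall x y, 0 <= d x y) /\ (forall y, d y y = 0).

Definition in_DS (R : realFieldType) (n : nat)
  (d : 'rV[R]_n -> 'rV[R]_n -> R) : Prop :=
  exists (phi : 'rV[R]_n -> R) (s : 'rV[R]_n -> 'rV[R]_n),
    convexf phi /\ (forall y, in_subdiff phi y (s y)) /\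
    (forall x y, d x y = phi x - phi y - dotv (s y) (x - y)).

(* Main.v *)
Require Import Defs.
From HB Require Import structures.
From mathcomp Require Import all_boot all_order all_algebra.
From mathcomp Require Import ring lra.
From Stdlib Require Import IndefiniteDescription.
Import Order.TTheory GRing.Theory Num.Theory.
Local Open Scope ring_scope.

Section Dot.
Variables (R : realFieldType) (n : nat).
Implicit Types (u v x y : 'rV[R]_n).

Lemma dotvDr u x y : dotv u (x + y) = dotv u x + dotv u y.
Proof. rewrite /dotv -big_split; apply: eq_bigr => i _; by rewrite mxE mulrDr. Qed.
Lemma dotvBr u x y : dotv u (x - y) = dotv u x - dotv u y.
Proof. rewrite /dotv -sumrB; apply: eq_bigr => i _; by rewrite !mxE mulrBr. Qed.
Lemma dotvZr u (t : R) x : dotv u (t *: x) = t * dotv u x.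
Proof. rewrite /dotv mulr_sumr; apply: eq_bigr => i _; by rewrite !mxE mulrCA. Qed.
Lemma dotvBl u v x : dotv (u - v) x = dotv u x - dotv v x.
Proof. rewrite /dotv -sumrB; apply: eq_bigr => i _; by rewrite !mxE mulrBl. Qed.
Lemma dotvNl u x : dotv (- u) x = - dotv u x.
Proof. rewrite /dotv -sumrN; apply: eq_bigr => i _; by rewrite !mxE mulNr. Qed.
End Dot.

Theorem theorem1 (R : realFieldType) (n : nat)
  (d : 'rV[R]_n -> 'rV[R]_n -> R) (hd : divergence d) :
  in_DS d <->
  ((forall a : 'rV[R]_n, convexf (fun x => d x a)) /\
   (forall a b : 'rV[R]_n, affinef (fun x => d x a - d x b))).
Proof.
case: hd => hge hdiag; split.
- case=> phi [s [cphi [sub hdef]]]; split.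
  + move=> a x y t t0 t1; rewrite !hdef.
    rewrite -subr_ge0.
    have -> : t * (phi x - phi a - dotv (s a) (x - a)) +
      (1 - t) * (phi y - phi a - dotv (s a) (y - a)) -
      (phi (t *: x + (1 - t) *: y) - phi a -
       dotv (s a) (t *: x + (1 - t) *: y - a)) =
      t * phi x + (1 - t) * phi y - phi (t *: x + (1 - t) *: y).
      by rewrite !dotvBr !dotvDr !dotvZr; ring.
    by rewrite subr_ge0; apply: cphi.
  + move=> a b; exists (s b - s a);
    exists (- phi a + dotv (s a) a + phi b - dotv (s b) b) => x.
    by rewrite !hdef !dotvBr dotvBl; ring.
- case=> hconv haff.
  pose phi := fun x => d x 0.
  have H : forall y, { h : 'rV[R]_n * R | forall x, d x y - d x 0 = dotv h.1 x + h.2 }.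
    move=> y; apply: constructive_indefinite_description.
    have [h [c Hc]] := haff y 0; by exists (h, c).
  pose s := fun y => - (proj1_sig (H y)).1.
  have Hd : forall x y, d x y = phi x - phi y - dotv (s y) (x - y).
    move=> x y; have Hx := proj2_sig (H y) x; have Hy := proj2_sig (H y) y.
    rewrite hdiag in Hy.
    rewrite /s /phi dotvNl dotvBr.
    move: Hx Hy; set h := (proj1_sig (H y)) => Hx Hy.
    lra.
  exists phi, s; split; [exact: hconv|split; last exact: Hd].
  move=> y x; have := hge x y; rewrite Hd; lra.
Qed.
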